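(* For all pairs of states $\rho,\sigma$, $\lambda(\rho\otimes\sigma)=\max\{\lambda(\rho),\lambda(\sigma)\}$.
   Context: Fixed computational basis (product basis for tensor products); $\Delta$ the dephasing map; $R^\rho=\Delta(\rho)^{-1/2}\rho\Delta(\rho)^{-1/2}$ (inverse on the support). For a $d$-dimensional state, $\lambda(\rho)=\max\{|R^\rho_{ij}|:1\le i<j\le d,\ |R^\rho_{ij}|<1\}$, with $\lambda(\rho)=0$ if this set is empty (for $\rho\otimes\sigma$ the indices run over pairs of product basis labels, ordered arbitrarily). *)

(* Defs.v *)
(* Complex scalars: an arbitrary numClosedFieldType C
   (e.g. algC, or complex R for R : rcfType). *)
From mathcomp Require Import all_boot all_order all_algebra.
From mathcomp Require Export mxtens.
Set Implicit Arguments. Unset Strict Implicit. Unset Printing Implicit Defensive.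
Import Order.TTheory GRing.Theory Num.Theory.
Local Open Scope ring_scope.

Section Defs.
Variable C : numClosedFieldType.

Definition adjmx {m n} (A : 'M[C]_(m, n)) : 'M[C]_(n, m) :=
  \matrix_(i, j) (A j i)^*.

Definition is_psd {d} (A : 'M[C]_d) : Prop :=
  adjmx A = A /\ forall v : 'cV[C]_d, 0 <= (adjmx v *m A *m v) 0 0.

Definition is_state {d} (rho : 'M[C]_d) : Prop :=
  is_psd rho /\ \tr rho = 1.

Definition dephase {d} (A : 'M[C]_d) : 'M[C]_d := diag_mx (\row_i A i i).

Definition invsqrt_diag {d} (D : 'M[C]_d) : 'M[C]_d :=
  diag_mx (\row_i (if D i i == 0 then 0 else (sqrtC (D i i))^-1)).

Definition Rmat {d} (rho : 'M[C]_d) : 'M[C]_d :=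
  invsqrt_diag (dephase rho) *m rho *m invsqrt_diag (dephase rho).

(* lambda(rho) = max { |R_ij| : i < j, |R_ij| < 1 }, and 0 if the set is
   empty (all candidates are >= 0, so a max-fold starting at 0 is exact). *)
Definition lambda {d} (rho : 'M[C]_d) : C :=
  \big[Num.max/0]_(i < d) \big[Num.max/0]_(j < d | (i < j)%N && (`|Rmat rho i j| < 1))
     `|Rmat rho i j|.
End Defs.

(* Main.v *)
Require Import Defs.
From mathcomp Require Import all_boot all_order all_algebra.
From mathcomp Require Import mxtens.
From mathcomp Require Import ring.
Import Order.TTheory GRing.Theory Num.Theory.
Local Open Scope ring_scope.
Section BM.
Variable C : numClosedFieldType.
Variable I : finType.
Implicit Types (P : pred I) (F : I -> C).

Lemma bm_ge0 (r : seq I) P F : (forall j, P j -> 0 <= F j) -> 0 <= \big[Num.max/0]_(i <- r | P i) F i.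
Proof.
move=> HF; elim/big_ind: _ => // x y hx hy.
have cxy : x >=< y by apply: real_comparable; apply: ger0_real.
by rewrite comparable_le_max ?hx.
Qed.

Lemma bm_le P F x : 0 <= x -> (forall i, P i -> 0 <= F i <= x) ->
  \big[Num.max/0]_(i | P i) F i <= x.
Proof.
move=> x0 H.
suff: 0 <= \big[Num.max/0]_(i | P i) F i <= x by case/andP.
elim/big_ind: _ => //; first by rewrite lexx x0.
move=> a b /andP[a0 ax] /andP[b0 bx].
have cab : a >=< b by apply: real_comparable; apply: ger0_real.
by rewrite comparable_le_max ?a0 // comparable_ge_max ?ax.
Qed.

Lemma bm_ub_seq (r : seq I) P F i : i \in r -> P i -> (forall j, P j -> 0 <= F j) ->
  F i <= \big[Num.max/0]_(j <- r | P j) F j.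
Proof.
move=> + Pi H; elim: r => [|a r IH] //=; rewrite big_cons inE.
have c : forall x, P x -> F x >=< \big[Num.max/0]_(j <- r | P j) F j.
  move=> x Px; apply: real_comparable; apply: ger0_real; first exact: H.
  exact: bm_ge0.
case/orP => [/eqP<-|ir].
  by rewrite Pi comparable_le_max ?c ?lexx.
case: ifP => Pa; last exact: IH.
by rewrite comparable_le_max ?c // IH ?orbT.
Qed.

Lemma bm_ub P F i : P i -> (forall j, P j -> 0 <= F j) ->
  F i <= \big[Num.max/0]_(j | P j) F j.
Proof. by move=> Pi H; apply: bm_ub_seq; rewrite ?mem_index_enum. Qed.
End BM.

Section M.
Variable C : numClosedFieldType.

Definition gg {d} (A : 'M[C]_d) i := if A i i == 0 then 0 else (sqrtC (A i i))^-1.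

Lemma RmatE d (A : 'M[C]_d) i j : Rmat A i j = gg A i * A i j * gg A j.
Proof.
rewrite /Rmat /invsqrt_diag /dephase mul_mx_diag mul_diag_mx !mxE.
by rewrite !eqxx !mulr1n.
Qed.

Lemma sum2 d (i j : 'I_d) (G : 'I_d -> C) : i != j ->
  (forall k, k != i -> k != j -> G k = 0) -> \sum_k G k = G i + G j.
Proof.
move=> ij H; rewrite (bigD1 i) //= (bigD1 j) /= ?big1 ?addr0 //; last by rewrite eq_sym.
by move=> k /andP[ki kj]; apply: H.
Qed.

Lemma qf2 d (A : 'M[C]_d) i j x y : i != j ->
  (adjmx (\col_k (if k == i then x else if k == j then y else 0) : 'cV[C]_d) *m A
     *m (\col_k (if k == i then x else if k == j then y else 0))) 0 0 =
   x^* * A i i * x + x^* * A i j * y + y^* * A j i * x + y^* * A j j * y.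
Proof.
move=> ij; set v := \col_k _; rewrite mxE (@sum2 _ _ _ _ ij); last first.
  by move=> k ki kj; rewrite /v !mxE (negPf ki) (negPf kj) mulr0.
rewrite /v !mxE (@sum2 _ _ _ _ ij); last by move=> k ki kj; rewrite !mxE (negPf ki) (negPf kj) rmorph0 mul0r.
rewrite (@sum2 _ _ _ _ ij); last by move=> k ki kj; rewrite !mxE (negPf ki) (negPf kj) rmorph0 mul0r.
rewrite !mxE eqxx eq_sym (negPf ij) eqxx.
ring.
Qed.

Lemma psd_diag d (A : 'M[C]_d) i : is_psd A -> 0 <= A i i.
Proof.
case=> _ /(_ (\col_k (if k == i then 1 else 0))); rewrite mxE (bigD1 i) //= big1.
  rewrite !mxE (bigD1 i) //= big1 ?mxE ?eqxx ?rmorph1 ?mul1r ?mulr1 ?addr0 //.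
  by move=> k ki; rewrite !mxE (negPf ki) rmorph0 mul0r.
by move=> k ki; rewrite !mxE (negPf ki) mulr0.
Qed.

Lemma psd_herm d (A : 'M[C]_d) i j : is_psd A -> A j i = (A i j)^*.
Proof. by case=> H _; rewrite -{1}H mxE. Qed.

Lemma psd_cs d (A : 'M[C]_d) i j : is_psd A -> i != j ->
  `|A i j| ^+ 2 <= A i i * A j j.
Proof.
move=> hA ij; have a0 := @psd_diag _ A i hA; have b0 := @psd_diag _ A j hA.
have hji := @psd_herm _ A i j hA; case: (hA) => _ Hq.
set a := A i i in a0 *; set b := A j j in b0 *; set c := A i j in hji *.
rewrite normCK.
move: (a0); rewrite le_eqVlt => /orP[/eqP a00|apos].
  move: (b0); rewrite le_eqVlt => /orP[/eqP b00|bpos].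
    have h := Hq (\col_k (if k == i then 1 else if k == j then - c^* else 0)).
    rewrite qf2 // -/a -/b -/c hji -a00 -b00 raddfN /= conjCK rmorph1 in h.
    have e : 1 * 0 * 1 + 1 * c * - c^* + - c * c^* * 1 + - c * 0 * - c^* = - (c * c^* + c * c^*) by ring.
    rewrite e oppr_ge0 in h.
    rewrite -a00 mul0r; apply: le_trans h; rewrite lerDl -normCK; exact: exprn_ge0.
  have h := Hq (\col_k (if k == i then b else if k == j then - c^* else 0)).
  rewrite qf2 // -/a -/b -/c hji raddfN /= conjCK (geC0_conj b0) in h.
  have e : b * a * b + b * c * - c^* + - c * c^* * b + - c * b * - c^* = b * (a * b - c * c^*) by ring.
  by rewrite e pmulr_rge0 // subr_ge0 in h.
have h := Hq (\col_k (if k == i then - c else if k == j then a else 0)).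
rewrite qf2 // -/a -/b -/c hji raddfN /= (geC0_conj a0) in h.
have e : - c^* * a * - c + - c^* * c * a + a * c^* * - c + a * b * a = a * (a * b - c * c^*) by ring.
by rewrite e pmulr_rge0 // subr_ge0 in h.
Qed.

Lemma R_diag d (A : 'M[C]_d) i : is_psd A ->
  Rmat A i i = if A i i == 0 then 0 else 1.
Proof.
move=> hA; rewrite RmatE /gg; case: eqP => [->|/eqP a0]; first by rewrite !mulr0.
rewrite -{2}(sqrtCK (A i i)) expr2.
have s0 : sqrtC (A i i) != 0 by rewrite sqrtC_eq0.
by field.
Qed.

Lemma R_bound d (A : 'M[C]_d) i j : is_psd A -> `|Rmat A i j| <= 1.
Proof.
move=> hA; have [<-|ij] := eqVneq i j.
  by rewrite R_diag //; case: ifP; rewrite ?normr0 ?normr1 ?ler01 ?lexx.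
rewrite RmatE /gg; case: eqP => [_|/eqP a0]; first by rewrite !mul0r normr0 ler01.
case: eqP => [_|/eqP b0]; first by rewrite !mulr0 normr0 ler01.
have a0' := @psd_diag _ A i hA; have b0' := @psd_diag _ A j hA.
have apos : 0 < A i i by rewrite lt_def a0.
have bpos : 0 < A j j by rewrite lt_def b0.
have sa : `|sqrtC (A i i)| = sqrtC (A i i) by rewrite ger0_norm // sqrtC_ge0.
have sb : `|sqrtC (A j j)| = sqrtC (A j j) by rewrite ger0_norm // sqrtC_ge0.
rewrite !normrM !normfV sa sb.
rewrite -(@expr_le1 _ 2) //; last by rewrite !mulr_ge0 ?invr_ge0 ?sqrtC_ge0.
rewrite !exprMn !exprVn !sqrtCK.
have -> : (A i i)^-1 * `|A i j| ^+ 2 * (A j j)^-1 = `|A i j| ^+ 2 / (A i i * A j j).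
  by rewrite invfM; ring.
by rewrite ler_pdivrMr ?mulr_gt0 // mul1r psd_cs.
Qed.

Lemma R_sym d (A : 'M[C]_d) i j : is_psd A -> `|Rmat A i j| = `|Rmat A j i|.
Proof.
move=> hA; rewrite !RmatE (@psd_herm _ A i j hA) !normrM norm_conjC.
ring.
Qed.

Lemma R_tens m n (rho : 'M[C]_m) (sigma : 'M[C]_n) i j k l :
  is_psd rho -> is_psd sigma ->
  Rmat (rho *t sigma) (mxtens_index (i, k)) (mxtens_index (j, l))
  = Rmat rho i j * Rmat sigma k l.
Proof.
move=> hr hs.
have G : forall i k, gg (rho *t sigma) (mxtens_index (i, k)) = gg rho i * gg sigma k.
  move=> i' k'; rewrite /gg tensmxE mulf_eq0.
  case: eqP => [_|/eqP a0] /=; first by rewrite mul0r.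
  case: eqP => [_|/eqP b0] /=; first by rewrite mulr0.
  rewrite sqrtCM ?invfM // nnegrE; exact: psd_diag.
by rewrite !RmatE !G tensmxE; ring.
Qed.

Lemma lambda_ge0 d (A : 'M[C]_d) : 0 <= lambda A.
Proof.
apply: bm_ge0 => i _; apply: bm_ge0 => j _; exact: normr_ge0.
Qed.

Lemma lambda_le d (A : 'M[C]_d) x : 0 <= x ->
  (forall i j : 'I_d, (i < j)%N -> `|Rmat A i j| < 1 -> `|Rmat A i j| <= x) -> lambda A <= x.
Proof.
move=> x0 H; apply: bm_le => // i _; apply/andP; split.
  by apply: bm_ge0 => j _; exact: normr_ge0.
apply: bm_le => // j /andP[ij lt1]; by rewrite normr_ge0 H.
Qed.

Lemma lambda_ub_lt d (A : 'M[C]_d) (i j : 'I_d) : (i < j)%N -> `|Rmat A i j| < 1 ->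
  `|Rmat A i j| <= lambda A.
Proof.
move=> ij lt1.
set inner := fun i0 : 'I_d =>
  \big[Num.max/0]_(j0 < d | (i0 < j0)%N && (`|Rmat A i0 j0| < 1)) `|Rmat A i0 j0|.
have H1 : `|Rmat A i j| <= inner i.
  by apply: bm_ub; rewrite ?ij ?lt1 // => k _; exact: normr_ge0.
apply: (le_trans H1); rewrite /lambda -/inner.
apply: (@bm_ub _ _ xpredT inner i) => // k _.
by apply: bm_ge0 => l _; exact: normr_ge0.
Qed.

Lemma lambda_ub d (A : 'M[C]_d) i j : is_psd A -> `|Rmat A i j| < 1 ->
  `|Rmat A i j| <= lambda A.
Proof.
move=> hA lt1; case: (ltngtP i j) => [ij|ji|/val_inj eij].
- exact: lambda_ub_lt.
- by rewrite (@R_sym _ A i j hA) in lt1 *; apply: lambda_ub_lt.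
- move: lt1; rewrite eij R_diag //; case: ifP => _.
    by rewrite normr0 lambda_ge0.
  by rewrite normr1 ltxx.
Qed.

Lemma state_diag d (A : 'M[C]_d) : is_state A -> exists k, A k k != 0.
Proof.
case=> _ tr; case: (pickP (fun k => A k k != 0)) => [k hk|h]; first by exists k.
move: tr; rewrite /mxtrace big1 => [/eqP|i _]; first by rewrite eq_sym oner_eq0.
by move/negbFE/eqP: (h i).
Qed.
End M.

Theorem lemma6 (C : numClosedFieldType) (m n : nat)
  (rho : 'M[C]_m) (sigma : 'M[C]_n) :
  is_state rho -> is_state sigma ->
  lambda (rho *t sigma) = Num.max (lambda rho) (lambda sigma).
Proof.
move=> sr ss; have [hr _] := sr; have [hs _] := ss.
have cmp : lambda rho >=< lambda sigma.
  by apply: real_comparable; apply: ger0_real; apply: lambda_ge0.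
apply: le_anti; apply/andP; split.
  apply: lambda_le; first by rewrite comparable_le_max // lambda_ge0.
  move=> p q _; case: (mxtens_indexP p) => i k; case: (mxtens_indexP q) => j l.
  rewrite R_tens // normrM => lt1.
  have ha := @R_bound _ _ rho i j hr; have hb := @R_bound _ _ sigma k l hs.
  case: (boolP (`|Rmat rho i j| < 1)) => [a1|na1].
    apply: le_trans (ler_piMr (normr_ge0 _) hb) _.
    by rewrite comparable_le_max // lambda_ub.
  case: (boolP (`|Rmat sigma k l| < 1)) => [b1|nb1].
    apply: le_trans (ler_piMl (normr_ge0 _) ha) _.
    by rewrite comparable_le_max // lambda_ub ?orbT.
  have r1 : (1 : C) \is Num.real by rewrite realE ler01.
  rewrite -real_leNgt ?normr_real // in na1.
  rewrite -real_leNgt ?normr_real // in nb1.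
  by have := mulr_ege1 na1 nb1; rewrite (lt_geF lt1).
have l0 := @lambda_ge0 _ _ (rho *t sigma).
rewrite comparable_ge_max //; apply/andP; split.
  apply: lambda_le => // i j ij lt1.
  have [k hk] := @state_diag _ _ sigma ss.
  have e : Rmat (rho *t sigma) (mxtens_index (i, k)) (mxtens_index (j, k)) = Rmat rho i j.
    by rewrite R_tens // R_diag // (negPf hk) mulr1.
  rewrite -e in lt1 *; apply: lambda_ub_lt => //=.
  rewrite ltn_add2r ltn_pmul2r //; exact: (leq_ltn_trans (leq0n k) (ltn_ord k)).
apply: lambda_le => // k l kl lt1.
have [i hi] := @state_diag _ _ rho sr.
have e : Rmat (rho *t sigma) (mxtens_index (i, k)) (mxtens_index (i, l)) = Rmat sigma k l.
  by rewrite R_tens // R_diag // (negPf hi) mul1r.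
rewrite -e in lt1 *; apply: lambda_ub_lt => //=.
by rewrite ltn_add2l.
Qed.
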